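(* Let $n\ge 2$ and let $(G(k))_{k\in\mathbb{N}}$ be a sequence of digraphs on $\mathcal{V}=\{1,\dots,n\}$ with knowledge sets evolving by the flooding update described in the context. Let $\psi(k)=n$ for $k\le\lceil n/2\rceil-1$ and $\psi(k)=n-k$ for $k\ge\lceil n/2\rceil$. If for every $k\in\{0,1,\dots,n-2\}$ the digraph $G(k)$ contains $\psi(k)(k)$, then for every node $i\in\mathcal{V}$ we have $|\mathcal{K}_i(n)|=n$, and $n$ is the smallest nonnegative integer $k$ with $|\mathcal{K}_i(k)|\le k$; hence every node can determine the network size $n$ from the cardinalities of its own knowledge sets by time $k=n$.
   Context: Network: $\mathcal{V}=\{1,\dots,n\}$; node $i$ holds initial data $d_i\in\mathbb{R}$, pairwise distinct. At discrete times $k\in\mathbb{N}$ communication follows digraph $G(k)=(\mathcal{V},\mathcal{E}(k))$; node $i$ sends to $j$ at time $k$ iff $(i,j)\in\mathcal{E}(k)$. Knowledge sets: $\mathcal{K}_i(0)=\{d_i\}$ and $\mathcal{K}_j(k+1)=\mathcal{K}_j(k)\cup\bigcup_{i:(i,j)\in\mathcal{E}(k)}\mathcal{K}_i(k)$. An input-cord to node $i$ at time $k$ is an ordered list $(\mathcal{I}^i_1,\dots,\mathcal{I}^i_m)$ of pairwise distinct nodes of $\mathcal{V}\setminus\{i\}$ with $(\mathcal{I}^i_j,\mathcal{I}^i_{j+1})\in\mathcal{E}(k)$ for $j=1,\dots,m-1$ and $(\mathcal{I}^i_m,i)\in\mathcal{E}(k)$; its cardinality is $m$. It is closed if moreover $(i,\mathcal{I}^i_1)\in\mathcal{E}(k)$.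 For an integer $\chi$, node $i$ is contained in a $\chi(k)$-cycle if it has at time $k$ a closed input-cord of cardinality greater than $\chi-2$; $G(k)$ contains $\chi(k)$ if every node is contained in a $\chi(k)$-cycle. *)

(* Defs.v *)
From HB Require Import structures.
From mathcomp Require Import all_boot all_order all_algebra.
From mathcomp Require Import finmap.
Set Implicit Arguments. Unset Strict Implicit. Unset Printing Implicit Defensive.
Local Open Scope fset_scope.

(* Nodes are 'I_n; the time-varying digraph is E : nat -> rel 'I_n,
   (E k i j) meaning (i,j) \in E(k), i.e. i sends to j at time k. *)

Fixpoint knowledge (n : nat) (T : choiceType) (d : 'I_n -> T)
    (E : nat -> rel 'I_n) (k : nat) (j : 'I_n) : {fset T} :=
  match k with
  | 0 => [fset d j]
  | k'.+1 => knowledge d E k' j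
             `|` \bigcup_(i <- enum 'I_n | E k' i j) knowledge d E k' i
  end.

Definition input_cord (n : nat) (e : rel 'I_n) (i : 'I_n) (s : seq 'I_n) : bool :=
  match s with
  | [::] => false
  | x :: p => [&& uniq s, i \notin s, path e x p & e (last x p) i]
  end.

Definition closed_input_cord (n : nat) (e : rel 'I_n) (i : 'I_n) (s : seq 'I_n) : bool :=
  input_cord e i s && (if s is x :: _ then e i x else false).

Definition in_chi_cycle (n : nat) (e : rel 'I_n) (chi : int) (i : 'I_n) : Prop :=
  exists s, closed_input_cord e i s /\ (chi - 2 < Posz (size s))%R.

Definition contains_chi (n : nat) (e : rel 'I_n) (chi : int) : Prop :=
  forall i, in_chi_cycle e chi i.

Definition psi (n k : nat) : int :=
  if (k < uphalf n)%N then Posz n else (Posz n - Posz k)%R.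

(* Main.v *)
Require Import Defs.
From HB Require Import structures.
From mathcomp Require Import all_boot all_order all_algebra.
From mathcomp Require Import finmap.
From mathcomp Require Import zify.

Set Implicit Arguments. Unset Strict Implicit. Unset Printing Implicit Defensive.
Local Open Scope fset_scope.

Fixpoint reachR (n : nat) (E : nat -> rel 'I_n) (k : nat) (j : 'I_n) : {set 'I_n} :=
  match k with
  | 0 => [set j]
  | k'.+1 => reachR E k' j :|: \bigcup_(i | E k' i j) reachR E k' i
  end.

Lemma knowR (n : nat) (T : choiceType) (d : 'I_n -> T) (E : nat -> rel 'I_n) k :
  forall j x, x \in knowledge d E k j <-> exists2 y, y \in reachR E k j & x = d y.
Proof.
elim: k => [|k IH] j x /=.
  rewrite in_fset1; split.
    by move/eqP=> ->; exists j; rewrite ?in_set1.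
  by move=> [y]; rewrite in_set1 => /eqP -> ->.
rewrite in_fsetU; split.
  case/orP.
    by move/IH=> [y Hy ->]; exists y; rewrite // in_setU Hy.
  move/bigfcupP=> [i /andP [_ Eij] /IH [y Hy ->]]; exists y => //.
  by rewrite in_setU; apply/orP; right; apply/bigcupP; exists i.
move=> [y]; rewrite in_setU => /orP [Hy ->|].
  by apply/orP; left; apply/IH; exists y.
move/bigcupP=> [i Eij Hy] ->; apply/orP; right; apply/bigfcupP.
by exists i; [rewrite mem_enum Eij | apply/IH; exists y].
Qed.

Lemma card_know (n : nat) (T : choiceType) (d : 'I_n -> T) (E : nat -> rel 'I_n) k j :
  injective d -> #|` knowledge d E k j| = #|reachR E k j|.
Proof.
move=> dinj.
have -> : knowledge d E k j = [fset d y | y in reachR E k j].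
  apply/fsetP => x; apply/idP/idP.
    by move/knowR=> [y Hy ->]; apply/imfsetP; exists y.
  by move/imfsetP=> [y Hy ->]; apply/knowR; exists y.
rewrite card_imfset //.
rewrite cardE; apply: perm_size; apply: uniq_perm.
- exact: enum_finmem_uniq.
- exact: enum_uniq.
move=> y; by rewrite enum_finmemE.
Qed.

Local Close Scope fset_scope.

Lemma path_closed (n : nat) (e : rel 'I_n) (S : {set 'I_n}) :
  (forall a b, e a b -> b \in S -> a \in S) ->
  forall p x, path e x p -> last x p \in S -> all (fun z => z \in S) (x :: p).
Proof.
move=> cl; elim=> [|y p IH] x /=.
  by move=> _ ->.
move=> /andP [exy pyp] hl.
have := IH y pyp hl => /= /andP [yS allp].
by rewrite /= (cl _ _ exy yS) yS allp.
Qed.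

Lemma mainQ (n : nat) (E : nat -> rel 'I_n) :
  (forall k : nat, (k <= n - 2)%N -> contains_chi (E k) (psi n k)) ->
  forall k (S : {set 'I_n}), (0 < #|S|)%N -> (#|S| + k <= n)%N ->
    (k + #|S| <= #|\bigcup_(j in S) reachR E k j|)%N.
Proof.
move=> H; elim=> [|k IH] S S0 Sk.
  rewrite add0n; apply: subset_leq_card; apply/subsetP => j jS.
  by apply/bigcupP; exists j; rewrite //= in_set1.
have kn : (k <= n - 2)%N by lia.
case: (boolP [exists p, (p \notin S) && [exists j, (j \in S) && E k p j]]).
  move/existsP=> [p /andP [pS /existsP [j /andP [jS Epj]]]].
  have cS : #|(p |: S)| = #|S|.+1 by rewrite cardsU1 pS.
  have h := IH (p |: S); rewrite cS in h.
  have {}h := h isT ltac:(lia).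
  rewrite addSn -addnS; apply: (leq_trans h).
  apply: subset_leq_card; apply/subsetP => x /bigcupP [j' ]; rewrite in_setU1.
  case/orP => [/eqP -> xp|j'S xj'].
    apply/bigcupP; exists j => //=; rewrite in_setU; apply/orP; right.
    by apply/bigcupP; exists p.
  by apply/bigcupP; exists j' => //=; rewrite in_setU xj'.
move/existsPn => hn.
have cl : forall a b, E k a b -> b \in S -> a \in S.
  move=> a b eab bS; apply/negPn/negP => aS.
  have := hn a; rewrite aS /= => /existsPn /(_ b); by rewrite bS eab.
have [j0 j0S] : exists j0, j0 \in S.
  by move: S0; rewrite card_gt0 => /set0Pn.
have [s [hcl hsz]] := H k kn j0.
move: hcl; rewrite /closed_input_cord /input_cord.
case: s hsz => [|x p] //= hsz /andP [/and4P [us j0s pp el] _].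
have al := path_closed cl pp (cl _ _ el j0S).
have hsub : (#|j0 :: x :: p| <= #|S|)%N.
  apply: subset_leq_card; apply/subsetP => z; rewrite inE => /orP [/eqP -> //|zs].
  by move/allP: al => /(_ z zs).
have : #|j0 :: x :: p| = size (j0 :: x :: p).
  by apply/card_uniqP; rewrite /= j0s us.
move=> eq; rewrite eq /= in hsub.
have hp : (Posz n - Posz k <= psi n k)%R.
  by rewrite /psi; case: ifP => _; lia.
have {}hsub : ((size p).+2 <= #|S|)%N := hsub.
exfalso; move: hsz hp hsub Sk; generalize (psi n k) (size p) => q m.
rewrite Num.Theory.ltrBlDr. lia.
Qed.

Lemma mono (n : nat) (E : nat -> rel 'I_n) (i : 'I_n) k m :
  (k <= m)%N -> (#|reachR E k i| <= #|reachR E m i|)%N.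
Proof.
elim: m => [|m IH]; first by rewrite leqn0 => /eqP ->.
rewrite leq_eqVlt => /orP [/eqP -> //|/IH h].
apply: (leq_trans h); apply: subset_leq_card; exact: subsetUl.
Qed.

Theorem corollary1 (n : nat) (T : choiceType) (d : 'I_n -> T)
    (E : nat -> rel 'I_n) :
  (2 <= n)%N ->
  injective d ->
  (forall k : nat, (k <= n - 2)%N -> contains_chi (E k) (psi n k)) ->
  forall i : 'I_n,
    #|` knowledge d E n i| = n /\
    (#|` knowledge d E n i| <= n)%N /\
    (forall k : nat, (#|` knowledge d E k i| <= k)%N -> (n <= k)%N).
Proof.
move=> hn dinj H i.
have Q k : (k < n)%N -> (k + 1 <= #|reachR E k i|)%N.
  move=> kn; have := mainQ H (S := [set i]) (k := k).
  rewrite cards1 big_set1; apply => //; lia.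
have up : (#|reachR E n i| <= n)%N.
  by rewrite -[X in (_ <= X)%N]card_ord max_card.
have eqn : #|` knowledge d E n i| = n.
  rewrite card_know //; apply/eqP; rewrite eqn_leq up /=.
  have h := Q (n - 1) ltac:(lia).
  have e1 : (n - 1 + 1 = n)%N by lia.
  rewrite e1 in h; apply: (leq_trans h).
  apply: mono; lia.
split => //; split; first by rewrite eqn.
move=> k; rewrite card_know // => hk.
rewrite leqNgt; apply/negP => kn; have := Q k kn; lia.
Qed.
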